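(* Let $M$ be a matroid on $E$ whose dual is transversal with presentation $\mathcal A=(A_1,\ldots,A_r)$, $r=r^*(M)$; let $e\in E$, ordered so that for some $k\in[r]$, $e\in A_i$ iff $i\le k$. Let $G$ be a minimal $(e,\mathcal A)$-presenting graph on vertex set $[k]$ (identity presenting map), and suppose $G$ is a tree with edge set $\{\{i_1,j_1\},\ldots,\{i_{k-1},j_{k-1}\}\}$. Define $B_m=A_{i_m}\cup A_{j_m}-e$ for $1\le m\le k-1$ and $B_m=A_{m+1}$ for $k\le m\le r-1$. Choose $J\subseteq[r-1]$ and suppose $(M\backslash e)^*$ has presentation $\mathcal C=(C_1,\ldots,C_{r-1})$, where $C_m=B_m$ if $m\notin J$ and $C_m=\mathrm{cl}_{M\backslash e}(B_m)$ if $m\in J$. Let $j\in J$. Then $(C_1,\ldots,C_{j-1},B_j,C_{j+1},\ldots,C_{r-1})$ is also a presentation of $(M\backslash e)^*$.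
   Context: A presentation $\mathcal A$ of a transversal matroid $N$ means $N=M[\mathcal A]$, whose independent sets are the partial transversals of $\mathcal A$. For $X\subseteq E$: $\mathcal A(X)=\{i:A_i\subseteq X\}$ and $\mathcal A_e(X)=\{i\in\mathcal A(X): e\in A_i\}$; $G[U]$ is the induced subgraph on $U$. A graph with vertex set $\mathcal A_e(E)=[k]$ is $(e,\mathcal A)$-presenting if for all distinct $i,j$ the graph $G[\mathcal A_e(\mathrm{cl}_M(A_i\cup A_j))]$ is connected; minimal if deleting any one edge destroys this property. *)

(* Defs.v *)
From mathcomp Require Import all_boot.
Set Implicit Arguments. Unset Strict Implicit. Unset Printing Implicit Defensive.

Section Matroids.
Variable T : finType.

Record mdata := MData { ground : {set T}; indep : {set T} -> bool }.

Definition is_matroid (M : mdata) : Prop :=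
  [/\ indep M set0,
      (forall X : {set T}, indep M X -> X \subset ground M),
      (forall X Y : {set T}, indep M Y -> X \subset Y -> indep M X) &
      (forall X Y : {set T}, indep M X -> indep M Y -> #|X| < #|Y| ->
          exists2 y, y \in Y :\: X & indep M (y |: X))].

Definition rank (M : mdata) (X : {set T}) : nat :=
  \max_(Y : {set T} | (Y \subset X) && indep M Y) #|Y|.

Definition mclosure (M : mdata) (X : {set T}) : {set T} :=
  [set x in ground M | rank M (x |: X) == rank M X].

Definition is_basis (M : mdata) (B : {set T}) : bool :=
  indep M B && [forall x in ground M :\: B, ~~ indep M (x |: B)].

Definition dual (M : mdata) : mdata :=
  MData (ground M)
        (fun X => (X \subset ground M) &&
                  [exists B : {set T}, is_basis M B && [disjoint X & B]]).

Definition delete (M : mdata) (e : T) : mdata :=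
  MData (ground M :\ e) (fun X => indep M X && (e \notin X)).

Definition ptrans (n : nat) (A : 'I_n -> {set T}) (X : {set T}) : bool :=
  [exists f : {ffun T -> option 'I_n},
     [forall x in X, forall y in X, (f x == f y) ==> (x == y)] &&
     [forall x in X, exists i, (f x == Some i) && (x \in A i)]].

Definition presents (N : mdata) (n : nat) (A : 'I_n -> {set T}) : Prop :=
  (forall i, A i \subset ground N) /\
  (forall X, indep N X = (X \subset ground N) && ptrans A X).

Definition Ae (n : nat) (A : 'I_n -> {set T}) (e : T) (X : {set T}) : {set 'I_n} :=
  [set i | (A i \subset X) && (e \in A i)].

Definition is_graph_on (n : nat) (Eg : {set {set 'I_n}}) (V : {set 'I_n}) : Prop :=
  forall f, f \in Eg -> exists x y, [/\ x != y, x \in V, y \in V & f = [set x; y]].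

Definition connected_on (n : nat) (Eg : {set {set 'I_n}}) (U : {set 'I_n}) : Prop :=
  forall x y, x \in U -> y \in U ->
    connect [rel a b | [&& a \in U, b \in U & [set a; b] \in Eg]] x y.

Definition presenting (M : mdata) (e : T) (n : nat) (A : 'I_n -> {set T})
    (Eg : {set {set 'I_n}}) : Prop :=
  is_graph_on Eg (Ae A e (ground M)) /\
  forall i j, i \in Ae A e (ground M) -> j \in Ae A e (ground M) -> i != j ->
    connected_on Eg (Ae A e (mclosure M (A i :|: A j))).

Definition min_presenting (M : mdata) (e : T) (n : nat) (A : 'I_n -> {set T})
    (Eg : {set {set 'I_n}}) : Prop :=
  presenting M e A Eg /\ forall f, f \in Eg -> ~ presenting M e A (Eg :\ f).

Definition is_tree (n : nat) (Eg : {set {set 'I_n}}) (V : {set 'I_n}) : Prop :=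
  is_graph_on Eg V /\ connected_on Eg V /\
  ~ exists s : seq 'I_n, [/\ uniq s, 3 <= size s &
                           cycle [rel a b | [set a; b] \in Eg] s].

(* The sets B_m (0-indexed, m < r-1):
   B_m = A_{i_m} u A_{j_m} - e  for m < k-1,   B_m = A_{m+1} otherwise. *)
Definition Bfam (r k : nat) (A : 'I_r -> {set T}) (e : T) (ei ej : nat -> 'I_r)
    (m : 'I_r.-1) : {set T} :=
  if val m < k.-1 then (A (ei m) :|: A (ej m)) :\ e
  else if insub (val m).+1 is Some i then A i else set0.
  (* the set0 branch never occurs since m.+1 < r *)

End Matroids.

(* Main.v *)
Require Import Defs.
From mathcomp Require Import all_boot.
From mathcomp Require Import zify.
Set Implicit Arguments. Unset Strict Implicit. Unset Printing Implicit Defensive.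

Section Helpers.
Variable T : finType.

Lemma ptransP n (B : 'I_n -> {set T}) (X : {set T}) (h : T -> option 'I_n) :
  {in X &, forall x y, h x = h y -> x = y} ->
  (forall x, x \in X -> exists2 i, h x = Some i & x \in B i) -> ptrans B X.
Proof.
move=> hi hm; apply/existsP; exists (finfun h); apply/andP; split.
- apply/forallP=> x; apply/implyP=> xX; apply/forallP=> y; apply/implyP=> yX.
  by apply/implyP; rewrite !ffunE => /eqP/hi ->.
- apply/forallP=> x; apply/implyP=> xX; have [i hx xB] := hm x xX.
  by apply/existsP; exists i; rewrite ffunE hx eqxx xB.
Qed.

Lemma ptransE n (B : 'I_n -> {set T}) (X : {set T}) : ptrans B X ->
  exists h : T -> option 'I_n, {in X &, forall x y, h x = h y -> x = y} /\
  (forall x, x \in X -> exists2 i, h x = Some i & x \in B i).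
Proof.
case/existsP=> f /andP[/forallP hi /forallP hm]; exists f; split.
- move=> x y xX yX fxy; move/implyP: (hi x) => /(_ xX) /forallP /(_ y).
  by move/implyP=> /(_ yX); rewrite fxy eqxx => /implyP /(_ isT) /eqP.
- move=> x xX; move/implyP: (hm x) => /(_ xX) /existsP [i /andP[/eqP fx xB]].
  by exists i.
Qed.

Lemma ptrans_mono n (B C : 'I_n -> {set T}) (X : {set T}) :
  (forall i, B i \subset C i) -> ptrans B X -> ptrans C X.
Proof.
move=> BC /ptransE [h [hi hm]]; apply: (ptransP hi) => x xX.
by have [i hx xB] := hm x xX; exists i => //; apply: (subsetP (BC i)).
Qed.

Lemma sub_mclosure (M : mdata T) (X : {set T}) : X \subset ground M -> X \subset mclosure M X.
Proof.
move=> XG; apply/subsetP=> x xX; rewrite inE (subsetP XG x xX) /=.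
by rewrite (setUidPr _ : [set x] :|: X = X) ?sub1set.
Qed.

Lemma path_iter (R : rel T) (step : {set T} -> {set T}) :
  (forall (S : {set T}) a b, a \in S -> R a b -> b \in step S) ->
  (forall S : {set T}, S \subset step S) ->
  forall p x (S : {set T}), x \in S -> path R x p -> last x p \in iter (size p) step S.
Proof.
move=> hstep hsub; elim=> [|y p IH] x S xS; first by [].
case/andP=> Rxy pp; rewrite [last _ _]/= [size _]/= iterSr.
by apply: IH pp; exact: hstep Rxy.
Qed.

End Helpers.

Theorem lemma3p7 (T : finType) (M : mdata T) (r k : nat)
  (A : 'I_r -> {set T}) (e : T) (ei ej : nat -> 'I_r)
  (J : {set 'I_r.-1}) (j : 'I_r.-1) :
  is_matroid M ->
  presents (dual M) A ->
  r = rank (dual M) (ground M) ->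
  e \in ground M ->
  0 < k <= r ->
  (forall i : 'I_r, (e \in A i) = (val i < k)) ->
  min_presenting M e A [set [set ei (val m); ej (val m)] | m : 'I_k.-1] ->
  is_tree [set [set ei (val m); ej (val m)] | m : 'I_k.-1] (Ae A e (ground M)) ->
  presents (dual (delete M e))
    (fun m => if m \in J then mclosure (delete M e) (Bfam k A e ei ej m)
              else Bfam k A e ei ej m) ->
  j \in J ->
  presents (dual (delete M e))
    (fun m => if m == j then Bfam k A e ei ej m
              else if m \in J then mclosure (delete M e) (Bfam k A e ei ej m)
              else Bfam k A e ei ej m).
Proof.
move=> matM presA _ eE /andP[k0 kr] eAk _ [_ [conn _]] presC _.
have [matI0 matG matS matA] := matM.
have Asub : forall i, A i \subset ground M by move=> i; exact: presA.1 i.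
have key1 : forall X, indep (dual (delete M e)) X ->
   exists h : T -> option 'I_r, {in e |: X &, forall x y, h x = h y -> x = y} /\
   (forall x, x \in e |: X -> exists2 i, h x = Some i & x \in A i).
  move=> X /andP[XG /existsP[B' /andP[bB' dXB']]].
  case/andP: bB' => /andP[iB' eB'] /forallP maxB'.
  pose i0 : 'I_r := Ordinal (leq_trans k0 kr).
  have : indep (dual M) [set e].
    rewrite presA.2 sub1set eE /=; apply: (@ptransP _ _ _ _ (fun _ => Some i0)).
    - by move=> x y; rewrite !inE => /eqP-> /eqP->.
    - by move=> x; rewrite inE => /eqP->; exists i0 => //; rewrite eAk.
  case/andP=> _ /existsP[B0 /andP[bB0 dB0]]; rewrite disjoints1 in dB0.
  case/andP: bB0 => iB0 /forallP maxB0.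
  have maxB0' : forall x, x \in ground M -> x \notin B0 -> ~~ indep M (x |: B0).
    by move=> x xG xB; move/implyP: (maxB0 x); apply; rewrite inE xB xG.
  have maxB'' : forall x, x \in ground M -> x != e -> x \notin B' -> ~~ indep M (x |: B').
    move=> x xG xe xB; move/implyP: (maxB' x); rewrite /=.
    rewrite !inE xB xe xG eq_sym (negbTE xe) (negbTE eB') andbT.
    by move=> H; have := H isT; rewrite /= andbT.
  have le : #|B0| <= #|B'|.
    rewrite leqNgt; apply/negP=> lt; have [y] := matA _ _ iB' iB0 lt.
    rewrite inE => /andP[yB' yB0] iy.
    have yG := subsetP (matG _ iy) y (setU11 y B').
    have ye : y != e by apply: contraNneq dB0 => <-.
    by move: (maxB'' y yG ye yB'); rewrite iy.
  have eB'dep : ~~ indep M (e |: B').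
    apply/negP=> ie; have lt : #|B0| < #|e |: B'| by rewrite cardsU1 eB' add1n ltnS.
    have [y] := matA _ _ iB0 ie lt; rewrite inE => /andP[yB0 _] iy.
    have yG := subsetP (matG _ iy) y (setU11 y B0).
    by move: (maxB0' y yG yB0); rewrite iy.
  have bM : is_basis M B'.
    rewrite /is_basis iB' /=; apply/forallP=> x; apply/implyP; rewrite inE => /andP[xB xG].
    by case: (eqVneq x e) => [->|xe]; [exact: eB'dep | exact: maxB''].
  have : indep (dual M) (e |: X).
    rewrite /=; apply/andP; split.
      apply/subsetP => x; rewrite !inE => /orP[/eqP->//|xX].
      by have:= subsetP XG x xX; rewrite !inE => /andP[].
    apply/existsP; exists B'; rewrite bM /= -setI_eq0; apply/eqP/setP=> x; rewrite !inE.
    case: (eqVneq x e) => [->|xe] /=; first by rewrite (negbTE eB').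
    by case xX: (x \in X) => //=; rewrite (disjointFr dXB' xX).
  by rewrite presA.2 => /andP[_ /ptransE].
have Bsub : forall m, Bfam k A e ei ej m \subset ground M :\ e.
  move=> m; rewrite /Bfam; case: ifP => mk.
    apply/subsetP => x; rewrite !inE => /andP[-> /orP[]] /(subsetP (Asub _)) -> //.
  case: insubP => [i _ vi|_]; last exact: sub0set.
  apply/subsetP=> x xA; rewrite !inE (subsetP (Asub i) x xA) andbT.
  apply: contraTneq xA => ->; rewrite eAk vi.
  by apply/negP => H; move: mk H; move: (val m) (val i) => a b; lia.
have BC : forall m, Bfam k A e ei ej m \subset mclosure (delete M e) (Bfam k A e ei ej m).
  by move=> m; apply: sub_mclosure; exact: Bsub.
have key2 : forall X, indep (dual (delete M e)) X -> ptrans (Bfam k A e ei ej) X.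
  move=> X iX; have XG : X \subset ground M :\ e by case/andP: iX.
  have [h [hi hm]] := key1 X iX.
  have [t ht eAt] := hm e (setU11 e X).
  have tk : val t < k by rewrite -eAk.
  have inV : forall i, (i \in Ae A e (ground M)) = (val i < k).
    by move=> i; rewrite inE Asub eAk.
  set V := Ae A e (ground M) in conn inV.
  set Eg := [set [set ei (val m); ej (val m)] | m : 'I_k.-1] in conn.
  pose R := [rel a b | [&& a \in V, b \in V & [set a; b] \in Eg]].
  pose step (S : {set 'I_r}) := S :|: [set b | [exists a in S, R a b]].
  pose Ss n := iter n step [set t].
  have dex : forall v, exists n, (v \in Ss n) || ~~ connect R t v.
    move=> v; case: (boolP (connect R t v)) => [/connectP [p pp ->]|_]; last first.
      by exists 0; rewrite orbT.
    exists (size p); rewrite (@path_iter _ R step) ?set11 //.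
      move=> S a b aS Rab; rewrite in_setU; apply/orP; right.
      by rewrite inE; apply/existsP; exists a; rewrite aS /=.
    by move=> S; exact: subsetUl.
  pose d v := ex_minn (dex v).
  have dmin : forall v n, v \in Ss n -> d v <= n.
    by move=> v n vS; rewrite /d; case: ex_minnP => m _ H; apply: H; rewrite vS.
  have dspec : forall v, connect R t v -> v \in Ss (d v).
    by move=> v ctv; rewrite /d; case: ex_minnP => m; rewrite ctv orbF.
  have par : forall v, v \in V -> v != t -> exists m : 'I_k.-1,
      [exists u, ([set u; v] == [set ei (val m); ej (val m)]) && (d u < d v)].
    move=> v vV vt; have tV : t \in V by rewrite inV.
    have ctv : connect R t v by exact: (conn t v tV vV).
    have vS := dspec v ctv; move: vS; case E: (d v) => [|n] vS.
      by move: vS; rewrite /Ss /= inE (negbTE vt).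
    move: vS; rewrite /Ss iterS -/(Ss n) inE => /orP[vS|].
      by have := dmin v n vS; rewrite E ltnn.
    rewrite inE => /existsP [a /andP[aS Rav]].
    move: (Rav) => /and3P [_ _ /imsetP [m _ em]].
    exists m; apply/existsP; exists a; rewrite em eqxx /=.
    by rewrite ltnS; apply: dmin.
  pose Q v (m : 'I_k.-1) :=
    [exists u, ([set u; v] == [set ei (val m); ej (val m)]) && (d u < d v)].
  pose mpar v := [pick m | Q v m].
  have kr' : k.-1 <= r.-1 by lia.
  pose h2 x := match h x with
    | Some i => if val i < k then omap (widen_ord kr') (mpar i)
                else insub (val i).-1
    | None => None end.
  have xeX : forall x, x \in X -> x \in e |: X by move=> x xX; rewrite setU1r.
  have xne : forall x, x \in X -> x != e.
    by move=> x xX; have := subsetP XG x xX; rewrite !inE => /andP[].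
  have hnt : forall x i, x \in X -> h x = Some i -> i != t.
    move=> x i xX hx; apply: contra_neq (xne x xX) => it.
    by apply: hi; rewrite ?setU11 ?xeX // hx ht it.
  have hpar : forall x i, x \in X -> h x = Some i -> val i < k ->
      exists2 m, mpar i = Some m & Q i m.
    move=> x i xX hx ik; have iV : i \in V by rewrite inV.
    have [m Pm] := par i iV (hnt x i xX hx).
    by rewrite /mpar; case: pickP => [m' Pm'|/(_ m)]; [exists m' | rewrite /Q Pm].
  have irr : forall i : 'I_r, (val i < k) = false -> (val i).-1 < r.-1.
    by move=> i ik; have ir0 : val i < r := ltn_ord i; lia.
  apply: (@ptransP _ _ _ _ h2).
    move=> x y xX yX; have [i hx xA] := hm x (xeX x xX).
    have [i' hy yA] := hm y (xeX y yX).
    have hxy : i = i' -> x = y by move=> ii; apply: hi; rewrite ?xeX // hx hy ii.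
    rewrite /h2 hx hy; case: ifP => ik; case: ifP => i'k.
    - have [m -> Pm] := hpar x i xX hx ik; have [m' -> Pm'] := hpar y i' yX hy i'k.
      move/(congr1 (omap val)) => /= [mm'].
      case: (eqVneq i i') => [/hxy//|ii'].
      case/existsP: Pm => u /andP[/eqP eu du]; case/existsP: Pm' => u' /andP[/eqP eu' du'].
      have mm2 : val m = val m' := mm'; rewrite -mm2 in eu'.
      have e2 : [set u; i] = [set u'; i'] by rewrite eu eu'.
      have : i \in [set u'; i'] by rewrite -e2 !inE eqxx orbT.
      rewrite !inE (negbTE ii') orbF => /eqP iu'.
      have : i' \in [set u; i] by rewrite e2 !inE eqxx orbT.
      rewrite !inE [i' == i]eq_sym (negbTE ii') orbF => /eqP i'u.
      rewrite -i'u in du; rewrite -iu' in du'.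
      by have := ltn_trans du du'; rewrite ltnn.
    - have [m -> _] := hpar x i xX hx ik.
      case: insubP => [o _ vo|]; last by rewrite irr.
      move/(congr1 (omap val)) => /= [mo]; rewrite vo in mo.
      by have := ltn_ord m; lia.
    - have [m -> _] := hpar y i' yX hy i'k.
      case: insubP => [o _ vo|]; last by rewrite irr.
      move/(congr1 (omap val)) => /= [mo]; rewrite vo in mo.
      by have := ltn_ord m; lia.
    - case: insubP => [o _ vo|]; last by rewrite irr.
      case: insubP => [o' _ vo'|]; last by rewrite irr.
      move/(congr1 (omap val)) => /= [ii]; rewrite vo vo' in ii.
      by apply: hxy; apply: val_inj; lia.
  move=> x xX; have [i hx xA] := hm x (xeX x xX).
  rewrite /h2 hx; case: ifP => ik.
    have [m -> Pm] := hpar x i xX hx ik; exists (widen_ord kr' m) => //.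
    case/existsP: Pm => u /andP[/eqP eu _].
    rewrite /Bfam /= ltn_ord !inE (xne x xX) /=.
    have : i \in [set u; i] by rewrite !inE eqxx orbT.
    by rewrite eu !inE => /orP[/eqP<-|/eqP<-]; rewrite xA ?orbT.
  have ir : (val i).-1 < r.-1.
    by have ir0 : val i < r := ltn_ord i; lia.
  case: insubP => [o _ vo|]; last by rewrite ir.
  exists o => //; rewrite /Bfam vo.
  have -> : ((val i).-1 < k.-1) = false by lia.
  have -> : (val i).-1.+1 = val i by lia.
  by rewrite valK.
have DC : forall m, (if m == j then Bfam k A e ei ej m
              else if m \in J then mclosure (delete M e) (Bfam k A e ei ej m)
              else Bfam k A e ei ej m) \subset
       (if m \in J then mclosure (delete M e) (Bfam k A e ei ej m)
              else Bfam k A e ei ej m).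
  move=> m; case: eqP => [->|_]; last exact: subxx.
  by case: ifP => _; [exact: BC | exact: subxx].
split.
  by move=> m; apply: subset_trans (DC m) (presC.1 m).
move=> X; apply/idP/andP.
  move=> iX; have := iX; rewrite presC.2 => /andP[XG _]; split => //.
  apply: ptrans_mono (key2 X iX) => m.
  case: eqP => _; first exact: subxx.
  by case: ifP => _; [exact: BC | exact: subxx].
by case=> XG pD; rewrite presC.2 XG /=; exact: ptrans_mono DC pD.
Qed.
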